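(* Let $\mathbb{K}$ be a field of characteristic not $2$, $E$ an $n$-dimensional $\mathbb{K}$-vector space with $n\geq 2$, and $\mathcal{V}$ a linear subspace of $\mathcal{L}(E)$ such that every $u\in\mathcal{V}$ has at most two distinct eigenvalues in $\mathbb{K}$; if $n=2$, assume moreover that every $u\in\mathcal{V}$ has at most one nonzero eigenvalue in $\mathbb{K}$. Then for every $2$-complex $(E_1,\dots,E_n)$ of $E$, there exists a $\mathcal{V}$-good vector not belonging to $E_1\cup\cdots\cup E_n$.
   Context: A $2$-complex of $E$ is an $n$-tuple $(E_i)_{1\leq i\leq n}$ of linear subspaces of $E$ with $\dim E_i=\lfloor (i+1)/2\rfloor$ for all $i$. A nonzero vector $x\in E$ is $\mathcal{V}$-good if there is no $u\in\mathcal{V}$ with $\operatorname{im}u=\mathbb{K}x$ and $\operatorname{tr}(u)=0$. *)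

(* Defs.v *)
(* E = 'rV[K]_n (row vectors); L(E) = 'M[K]_n, where a matrix
   u acts on row vectors by x |-> x *m u, so im u is the row space of u. *)
From HB Require Import structures.
From mathcomp Require Import all_boot all_order all_algebra.
Set Implicit Arguments. Unset Strict Implicit. Unset Printing Implicit Defensive.
Import Order.TTheory GRing.Theory Num.Theory.
Local Open Scope ring_scope.

Definition at_most_two_eigenvalues (K : fieldType) (n : nat) (u : 'M[K]_n) : Prop :=
  forall a b c : K, eigenvalue u a -> eigenvalue u b -> eigenvalue u c ->
    a = b \/ a = c \/ b = c.

Definition at_most_one_nonzero_eigenvalue (K : fieldType) (n : nat) (u : 'M[K]_n) : Prop :=
  forall a b : K, a != 0 -> b != 0 -> eigenvalue u a -> eigenvalue u b -> a = b.

Definition two_complex (K : fieldType) (n : nat) (Es : nat -> {vspace 'rV[K]_n}) : Prop :=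
  forall i, (1 <= i <= n)%N -> \dim (Es i) = ((i + 1) %/ 2)%N.

Definition good (K : fieldType) (n : nat) (V : {vspace 'M[K]_n}) (x : 'rV[K]_n) : Prop :=
  x != 0 /\ ~ (exists u : 'M[K]_n, [/\ u \in V, (u == x)%MS & \tr u = 0]).

(* Main.v *)
Require Import Defs.
From HB Require Import structures.
From mathcomp Require Import all_boot all_order all_algebra.
From mathcomp Require Import zify.
From Stdlib Require Import Classical ClassicalEpsilon.
Set Implicit Arguments. Unset Strict Implicit. Unset Printing Implicit Defensive.
Import Order.TTheory GRing.Theory Num.Theory.
Local Open Scope ring_scope.

Section Grid.
Variables (K : fieldType) (n t : nat) (g : 'I_t -> K).
Hypothesis ginj : injective g.

Definition vec (f : {ffun 'I_n -> 'I_t}) : 'rV[K]_n := \row_j g (f j).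

Lemma vec_inj : injective vec.
Proof.
move=> f1 f2 /rowP h; apply/ffunP => j; apply: ginj; have := h j; by rewrite !mxE.
Qed.

Lemma grid_bound (W : {vspace 'rV[K]_n}) :
  (#|[set f | vec f \in W]| <= t ^ \dim W)%N.
Proof.
set r := \dim W.
pose B : 'M[K]_(r, n) := \matrix_(i < r) (vbasis W)`_i.
have Bfree : row_free B.
  apply: inj_row_free => v; rewrite mulmx_sum_row => h.
  apply/rowP => i; rewrite mxE.
  have := freeP (basis_free (vbasisP W)) (fun i => v 0 i).
  move=> /(_ _ i) -> //; rewrite -[RHS]h.
  by apply: eq_bigr => k _; rewrite rowK.
have Bspan : forall x, x \in W -> x = (\row_i coord (vbasis W) i x) *m B.
  move=> x xW; rewrite mulmx_sum_row {1}(coord_vbasis xW).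
  by apply: eq_bigr => k _; rewrite rowK mxE.
pose A := B^T.
have rA : \rank A = r by rewrite mxrank_tr; apply/eqP.
pose h := maxrankfun A.
pose C := (rowsub h A)^T.
have Cfree : row_free C.
  rewrite /row_free mxrank_tr; have := maxrowsub_free A.
  by rewrite /row_free => /eqP ->; rewrite rA.
pose p (f : {ffun 'I_n -> 'I_t}) : {ffun 'I_(\rank A) -> 'I_t} := [ffun k => f (h k)].
pose P : 'M[K]_(n, \rank A) := \matrix_(j, k) ((h k == j)%:R).
have BP : B *m P = C.
  apply/matrixP => i k; rewrite !mxE (bigD1 (h k)) //= !mxE eqxx mulr1.
  rewrite big1 ?addr0; last first.
    by move=> j /negPf; rewrite !mxE eq_sym => ->; rewrite mulr0.
  by [].
have vecP : forall f k, (vec f *m P) 0 k = g (f (h k)).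
  move=> f k; rewrite !mxE (bigD1 (h k)) //= !mxE eqxx mulr1.
  rewrite big1 ?addr0 // => j /negPf; rewrite !mxE eq_sym => ->; by rewrite mulr0.
have pinj : {in [set f | vec f \in W] &, injective p}.
  move=> f1 f2; rewrite !inE => f1W f2W eqp.
  apply: vec_inj; rewrite (Bspan _ f1W) (Bspan _ f2W); congr (_ *m _).
  apply: (row_free_inj Cfree); rewrite -!BP !mulmxA -(Bspan _ f1W) -(Bspan _ f2W).
  apply/rowP => k; rewrite !vecP.
  by have := congr1 (fun F : {ffun _ -> _} => F k) eqp; rewrite !ffunE => ->.
rewrite -(card_in_imset pinj).
apply: leq_trans (max_card _) _.
by rewrite card_ffun !card_ord rA.
Qed.
End Grid.


Lemma witness (K : fieldType) n (V : {vspace 'M[K]_n}) (x : 'rV[K]_n) u :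
  x != 0 -> u \in V -> (u == x)%MS -> \tr u = 0 ->
  exists D : 'cV[K]_n, [/\ D != 0, x *m D = 0 & D *m x \in V].
Proof.
move=> x0 uV /andP[ux xu] tr0.
have [D defu] := submxP ux.
exists D; split.
- apply/eqP => D0; move: xu; rewrite defu D0 mul0mx submx0.
  by rewrite (negPf x0).
- rewrite [x *m D]mx11_scalar; move: tr0; rewrite defu mxtrace_mulC trace_mx11.
  by move=> ->; rewrite raddf0.
- by rewrite -defu.
Qed.

Lemma mul11 (K : fieldType) n (c : 'M[K]_1) (x : 'rV[K]_n) : c *m x = c 0 0 *: x.
Proof. by rewrite {1}[c]mx11_scalar mul_scalar_mx. Qed.

Lemma pair_prop (K : fieldType) n (V : {vspace 'M[K]_n}) :
  (2 \notin [pchar K])%N -> (2 <= n)%N ->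
  (forall u, u \in V -> at_most_two_eigenvalues u) ->
  (n = 2%N -> forall u, u \in V -> at_most_one_nonzero_eigenvalue u) ->
  forall x y (Dx Dy : 'cV_n), x *m Dx = 0 -> y *m Dy = 0 ->
  Dx *m x \in V -> Dy *m y \in V ->
  (y *m Dx == 0) || (x *m Dy == 0).
Proof.
move=> ch2 n2 H2 H1 x y Dx Dy xDx yDy DxV DyV.
apply/negPn/negP => /norP[a0 b0].
set a := (y *m Dx) 0 0; set b := (x *m Dy) 0 0.
have ya : y *m Dx = a%:M by rewrite [LHS]mx11_scalar.
have xb : x *m Dy = b%:M by rewrite [LHS]mx11_scalar.
have anz : a != 0 by apply: contra a0; rewrite ya => /eqP ->; rewrite raddf0.
have bnz : b != 0 by apply: contra b0; rewrite xb => /eqP ->; rewrite raddf0.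
set M := a^-1 *: (Dx *m x) + b^-1 *: (Dy *m y).
have MV : M \in V by rewrite memvD // memvZ.
have zM : forall z : 'rV_n, z *m M = (z *m Dx) 0 0 / a *: x + (z *m Dy) 0 0 / b *: y.
  move=> z; rewrite mulmxDr -!scalemxAr !mulmxA !mul11 !scalerA.
  by rewrite [a^-1 * _]mulrC [b^-1 * _]mulrC.
have two0 : (2%:R : K) != 0.
  by apply: contra ch2 => h; rewrite inE /=.
have e1 : eigenvalue M 1.
  apply/eigenvalueP; exists (x + y).
    rewrite zM !mulmxDl xDx yDy add0r addr0 ya xb !mxE !eqxx /= !mulr1n.
    by rewrite !divff // !scale1r.
  apply: contra a0 => /eqP xy.
  have -> : y = - x by apply/eqP; rewrite -addr_eq0 addrC xy.
  by rewrite mulNmx xDx oppr0.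
have em1 : eigenvalue M (-1).
  apply/eigenvalueP; exists (x - y).
    rewrite zM !mulmxBl xDx yDy sub0r subr0 ya xb !mxE !eqxx /= !mulr1n.
    rewrite mulNr !divff // scaleN1r scale1r scaleNr.
    by rewrite scale1r opprB addrC.
  apply: contra a0; rewrite subr_eq0 => /eqP <-.
  by rewrite xDx.
have m11 : (1 : K) != -1.
  apply: contra two0; rewrite -subr_eq0 opprK => /eqP h.
  by rewrite mulr2n h.
have [n2e|n3] := eqVneq n 2%N.
  have := H1 n2e M MV 1 (-1) (oner_neq0 K) _ e1 em1.
  rewrite oppr_eq0 oner_eq0 => /(_ isT) /eqP.
  by rewrite (negbTE m11).
have e0 : eigenvalue M 0.
  rewrite /eigenvalue /eigenspace kermx_eq0 /row_free.
  have -> : (0 : K)%:M = 0 :> 'M_n by rewrite raddf0.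
  rewrite subr0 neq_ltn; apply/orP; left.
  have r1 : forall (c : K) (D : 'cV_n) (z : 'rV_n), (\rank (c *: (D *m z)) <= 1)%N.
    move=> c D z; rewrite scalemxAl; apply: leq_trans (mxrankM_maxr _ _) _.
    exact: rank_leq_row.
  apply: (@leq_ltn_trans 2); last by rewrite ltn_neqAle eq_sym n3 n2.
  rewrite /M; apply: leq_trans (mxrank_add _ _) _.
  by rewrite -[2%N]/(1 + 1)%N leq_add.
have := H2 M MV 1 (-1) 0 e1 em1 e0.
case=> [/eqP|[/eqP|/eqP]].
- by rewrite (negbTE m11).
- by rewrite oner_eq0.
- by rewrite oppr_eq0 oner_eq0.
Qed.


Lemma hyper_dim (K : fieldType) n (D : 'cV[K]_n) : D != 0 ->
  exists W : {vspace 'rV[K]_n},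
    (forall v, (v \in W) = (v *m D == 0)) /\ \dim W = n.-1.
Proof.
move=> D0.
pose f := linfun (mulmxr D : 'rV[K]_n -> 'M[K]_1).
exists (lker f); split.
  by move=> v; rewrite memv_ker lfunE.
have := limg_ker_dim f fullv.
rewrite capfv dimvf.
have dl1 : (\dim (limg f) <= 1)%N.
  by apply: leq_trans (dimvS (subvf _)) _; rewrite dimvf /dim /= muln1.
have dl0 : \dim (limg f) != 0%N.
  rewrite dimv_eq0; apply/negP => /eqP l0.
  have [j Dj] : exists j, D j 0 != 0.
    apply/existsP; apply: contraR D0 => /existsPn h.
    by apply/eqP/matrixP => i k; rewrite (ord1 k) mxE; apply/eqP/negbNE/h.
  have := memv_img f (memvf (delta_mx 0 j : 'rV[K]_n)).
  rewrite l0 memv0 lfunE /= => /eqP /matrixP /(_ 0 0).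
  rewrite !mxE (bigD1 j) //= big1 ?addr0; last first.
    by move=> k /negPf; rewrite mxE eq_sym => ->; rewrite andbF mul0r.
  by rewrite mxE !eqxx mul1r => /eqP; rewrite (negPf Dj).
have -> : \dim (limg f) = 1%N.
  by apply/eqP; rewrite eqn_leq dl1 lt0n dl0.
move=> h; have : (\dim (lker f)).+1 = n by rewrite -addn1 h /dim /= mul1n.
by move=> e; rewrite -[in RHS]e.
Qed.

Lemma count_contra (K : fieldType) n t (g : 'I_t -> K) (ginj : injective g)
  (S : pred 'rV[K]_n) (D : 'rV[K]_n -> 'cV[K]_n) (r : nat) :
  (forall x, S x -> D x != 0) ->
  (forall x, S x -> x *m D x = 0) ->
  (forall x y, S x -> S y -> (y *m D x == 0) || (x *m D y == 0)) ->
  (forall x, S x ->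
     r <= #|[set f | (vec g f *m D x == 0%R) && ~~ S (vec g f)]|)%N ->
  (0 < #|[set f | S (vec g f)]|)%N ->
  (2 * (t ^ n.-1 - r) <= #|[set f | S (vec g f)]|)%N -> False.
Proof.
move=> Dnz Dx Dp Dr.
set Sg := [set f | S (vec g f)]; set s := #|Sg| => s0 hs.
pose c (f f' : {ffun 'I_n -> 'I_t}) : nat := (vec g f' *m D (vec g f) == 0).
pose N := (\sum_(f in Sg) \sum_(f' in Sg) c f f')%N.
have low : (s * s + s <= 2 * N)%N.
  have -> : (2 * N = \sum_(f in Sg) \sum_(f' in Sg) (c f f' + c f' f))%N.
    rewrite mul2n -addnn {1}/N exchange_big /N -big_split /=.
    by apply: eq_bigr => f _; rewrite -big_split /= ; apply: eq_bigr => f' _; rewrite addnC.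
  have -> : (s * s + s = \sum_(f in Sg) \sum_(f' in Sg) (1 + (f == f')))%N.
    rewrite addnC -mulnS -sum_nat_const; apply: eq_bigr => f fS.
    rewrite big_split /= sum_nat_const muln1 -addn1; congr (_ + _)%N.
    rewrite (bigD1 f) //= eqxx big1 // => f' /andP[_ /negPf].
    by rewrite eq_sym => ->.
  apply: leq_sum => f fS; apply: leq_sum => f' f'S.
  move: fS f'S; rewrite !inE => fS f'S.
  have [<-|ne] := eqVneq f f'.
    by rewrite /c Dx // eqxx.
  rewrite addn0 /c; have := Dp _ _ fS f'S.
  by case: (_ == 0); case: (_ == 0).
have up : (N <= s * (t ^ n.-1 - r))%N.
  rewrite /N -sum_nat_const; apply: leq_sum => f; rewrite inE => fS.
  have [W [Wm Wd]] := hyper_dim (Dnz _ fS).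
  have gb := grid_bound ginj W; rewrite Wd in gb.
  rewrite -(cardsID Sg) in gb.
  have e1 : (\sum_(f' in Sg) c f f' = #|[set f' | vec g f' \in W] :&: Sg|)%N.
    rewrite -sum1_card [RHS]big_mkcond [LHS]big_mkcond /=; apply: eq_bigr => f' _.
    rewrite !inE Wm andbC /c; case: (S _) => //=; by case: (_ == 0).
  have e2 : #|[set f' | vec g f' \in W] :\: Sg| = 
            #|[set f' | (vec g f' *m D (vec g f) == 0%R) && ~~ S (vec g f')]|.
    by apply: eq_card => f'; rewrite !inE Wm andbC.
  rewrite e1 leq_subRL; last first.
    by apply: leq_trans (Dr _ fS) _; rewrite -e2; apply: leq_trans gb; exact: leq_addl.
  by apply: leq_trans gb; rewrite addnC leq_add2l e2 Dr.
have : (s * s + s <= s * s)%N.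
  apply: (leq_trans low); apply: leq_trans (leq_mul (leqnn 2) up) _.
  by rewrite mulnCA leq_mul2l hs orbT.
by rewrite -{2}[(s * s)%N]addn0 leq_add2l leqn0 => /eqP s00; rewrite s00 in s0.
Qed.


Lemma union_bound (T : finType) (P : nat -> T -> bool) k :
  (#|[set x | [exists i : 'I_k, P i x]]| <= \sum_(i < k) #|[set x | P i x]|)%N.
Proof.
have cE : forall Q : T -> bool, #|[set x | Q x]| = (\sum_x (Q x : nat))%N.
  by move=> Q; rewrite -sum1_card big_mkcond /=; apply: eq_bigr => x _; rewrite inE; case: (Q x).
rewrite cE (eq_bigr (fun i : 'I_k => \sum_x (P i x : nat))%N); last by move=> i _; rewrite cE.
rewrite exchange_big /=; apply: leq_sum => x _.
case: existsP => [[i Pi]|] //=.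
by rewrite (bigD1 i) //= Pi leq_addr.
Qed.

Definition avoid (K : fieldType) n (Es : nat -> {vspace 'rV[K]_n}) (x : 'rV[K]_n) : bool :=
  [forall i : 'I_n, x \notin Es i.+1].


Lemma assemble (K : fieldType) (n : nat) (V : {vspace 'M[K]_n})
  (Es : nat -> {vspace 'rV[K]_n}) (sq : seq K) (r : nat) (sq0 : (0 < size sq)%N) :
  (2 \notin [pchar K])%N -> (2 <= n)%N ->
  (forall u, u \in V -> at_most_two_eigenvalues u) ->
  (n = 2%N -> forall u, u \in V -> at_most_one_nonzero_eigenvalue u) ->
  uniq sq -> nth 0 sq 0 = 0 ->
  (forall (D : 'cV[K]_n), D != 0%R ->
     r <= #|[set f | (vec (fun i : 'I_(size sq) => nth 0%R sq i) f *m D == 0%R)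
                    && ~~ avoid Es (vec (fun i : 'I_(size sq) => nth 0%R sq i) f)]|)%N ->
  (2 * (size sq ^ n.-1 - r) + (1 + \sum_(i < n) (size sq ^ \dim (Es i.+1) - 1))
     <= size sq ^ n)%N ->
  (1 + \sum_(i < n) (size sq ^ \dim (Es i.+1) - 1) < size sq ^ n)%N ->
  exists x, good V x /\ avoid Es x.
Proof.
move=> ch2 n2 H2 H1 usq sqz Hr num1 num2.
case: (classic (exists x, good V x /\ avoid Es x)) => // nE.
set t := size sq in Hr num1 num2 sq0.
pose g := fun i : 'I_t => nth 0 sq i.
have ginj : injective g.
  by move=> i j /eqP; rewrite /g nth_uniq // => /eqP /val_inj.
have n0 : (0 < n)%N by apply: leq_trans n2.
have hD : forall x : 'rV[K]_n, exists D : 'cV[K]_n,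
    avoid Es x -> [/\ D != 0, x *m D = 0 & D *m x \in V].
  move=> x; case av: (avoid Es x); last by exists 0.
  have x0 : x != 0.
    move/forallP: av => /(_ (Ordinal n0)) /=; apply: contraNneq => ->.
    exact: mem0v.
  have [u [uV ux tu]] : exists u : 'M[K]_n, [/\ u \in V, (u == x)%MS & \tr u = 0].
    apply: NNPP => nu; apply: nE; exists x; split => //; split => //.
  have [D [D0 xD DV]] := witness x0 uV ux tu.
  by exists D.
pose D x := proj1_sig (constructive_indefinite_description _ (hD x)).
have DP : forall x, avoid Es x -> [/\ D x != 0, x *m D x = 0 & D x *m x \in V].
  by move=> x; rewrite /D; case: constructive_indefinite_description.
pose f0 : {ffun 'I_n -> 'I_t} := [ffun => Ordinal sq0].
have vf0 : vec g f0 = 0 by apply/rowP => j; rewrite !mxE ffunE /g /= sqz.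
have bad : (#|[set f | ~~ avoid Es (vec g f)]| <= 1 + \sum_(i < n) (t ^ \dim (Es i.+1) - 1))%N.
  pose P (i : nat) f := (f != f0) && (vec g f \in Es i.+1).
  have sub : [set f | ~~ avoid Es (vec g f)] \subset f0 |: [set f | [exists i : 'I_n, P i f]].
    apply/subsetP => f; rewrite !inE /avoid negb_forall => /existsP [i]; rewrite negbK => fi.
    case: eqVneq => //= ne; apply/existsP; exists i; by rewrite /P ne.
  apply: leq_trans (subset_leq_card sub) _.
  rewrite cardsU1; apply: leq_add; first by case: (_ \notin _).
  apply: leq_trans (union_bound _ _) _.
  apply: leq_sum => i _.
  have gb := grid_bound ginj (Es i.+1).
  rewrite (cardsD1 f0) inE vf0 mem0v /= in gb.
  rewrite leq_subRL; last by apply: leq_trans gb; exact: leq_addr.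
  apply: leq_trans gb; rewrite leq_add2l; apply: subset_leq_card.
  by apply/subsetP => f; rewrite !inE /P andbC.
have cs := cardsC [set f | avoid Es (vec g f)].
rewrite card_ffun !card_ord in cs.
have cC : #|~: [set f | avoid Es (vec g f)]| = #|[set f | ~~ avoid Es (vec g f)]|.
  by apply: eq_card => f; rewrite !inE.
rewrite cC in cs.
exfalso; apply: (@count_contra K n t g ginj (avoid Es) D r).
- by move=> x /DP[].
- by move=> x /DP[].
- move=> x y /DP[_ xD DxV] /DP[_ yD DyV].
  exact: (pair_prop ch2 n2 H2 H1 xD yD DxV DyV).
- by move=> x /DP[D0 _ _]; apply: Hr.
- rewrite -(ltn_add2r #|[set f | ~~ avoid Es (vec g f)]|) add0n cs.
  exact: leq_ltn_trans bad num2.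
- rewrite -(leq_add2r #|[set f | ~~ avoid Es (vec g f)]|) cs.
  apply: leq_trans num1; by rewrite leq_add2l.
Qed.


Lemma sum_bound m : (\sum_(i < m.+4) 3 ^ (i.+2 %/ 2) <= 3 ^ m.+3)%N.
Proof.
elim: m => [|m IH]; first by rewrite !big_ord_recr big_ord0.
rewrite big_ord_recr /= expnS.
have h : (3 ^ (m.+4.+2 %/ 2) <= 3 ^ m.+3)%N.
  rewrite leq_exp2l //.
  have := leq_trunc_div m.+4.+2 2.
  move: (m.+4.+2 %/ 2)%N => q; lia.

apply: leq_trans (leq_add IH h) _; by rewrite !mulSn mul0n addn0 leq_add2l leq_addr.
Qed.

Lemma num3 n : (2 <= n)%N -> n != 3%N ->
  (2 * (3 ^ n.-1 - 1) + (1 + \sum_(i < n) (3 ^ (i.+2 %/ 2) - 1)) <= 3 ^ n)%N.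
Proof.
move=> n2 n3.
have [->|ne2] := eqVneq n 2%N; first by rewrite !big_ord_recr big_ord0.
case: n n2 n3 ne2 => [|[|[|[|m]]]] //= _ _ _.
have s1 : (\sum_(i < m.+4) (3 ^ (i.+2 %/ 2) - 1) <= 3 ^ m.+3)%N.
  apply: leq_trans (sum_bound m); apply: leq_sum => i _; exact: leq_subr.
have p : (0 < 3 ^ m.+3)%N by rewrite expn_gt0.
rewrite [(3 ^ m.+4)%N]expnS.
move: s1; move: (\sum_(i < m.+4) _)%N => S; lia.
Qed.


Lemma Hr1 (K : fieldType) n (Es : nat -> {vspace 'rV[K]_n}) (sq : seq K)
  (sq0 : (0 < size sq)%N) : nth 0 sq 0 = 0 -> (0 < n)%N ->
  forall (D : 'cV[K]_n), D != 0 ->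
     (1 <= #|[set f | (vec (fun i : 'I_(size sq) => nth 0%R sq i) f *m D == 0%R)
                    && ~~ avoid Es (vec (fun i : 'I_(size sq) => nth 0%R sq i) f)]|)%N.
Proof.
move=> sqz n0 D _; apply/card_gt0P; exists [ffun => Ordinal sq0].
rewrite inE; set w := vec _ _.
have -> : w = 0 by apply/rowP => j; rewrite !mxE ffunE /= sqz.
rewrite mul0mx eqxx /= /avoid negb_forall; apply/existsP; exists (Ordinal n0).
by rewrite negbK mem0v.
Qed.

Definition sq3 (K : fieldType) : seq K := [:: 0; 1; -1].

Lemma Hr3 (K : fieldType) (Es : nat -> {vspace 'rV[K]_3}) :
  (forall a : K, a \in [:: 0; 1; -1]) -> \dim (Es 3%N) = 2%N -> (1 : K) != -1 ->
  forall (D : 'cV[K]_3), D != 0 ->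
     (3 <= #|[set f | (vec (fun i : 'I_(size (sq3 K)) => nth 0%R (sq3 K) i) f *m D == 0%R)
          && ~~ avoid Es (vec (fun i : 'I_(size (sq3 K)) => nth 0%R (sq3 K) i) f)]|)%N.
Proof.
move=> all3 dE3 m11 D D0.
set sq := sq3 K.
set g := (fun i : 'I_(size sq) => nth 0%R sq i).
have surj : forall y : 'rV[K]_3, exists f, vec g f = y.
  move=> y.
  have hj : forall j : 'I_3, (index (y ord0 j) sq < size sq)%N by move=> j; rewrite index_mem.
  exists [ffun j => Ordinal (hj j)]; apply/rowP => j.
  by rewrite !mxE ffunE /g /= nth_index.
have [W [Wm Wd]] := hyper_dim D0.
have dc : (1 <= \dim (W :&: Es 3%N))%N.
  have := dimv_sum_cap W (Es 3%N); rewrite Wd dE3 /=.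
  have : (\dim (W + Es 3%N) <= 3)%N.
    by apply: leq_trans (dimvS (subvf _)) _; rewrite dimvf /dim /= mul1n.
  lia.
set v := vpick (W :&: Es 3%N).
have v0 : v != 0 by rewrite vpick0 -dimv_eq0 -lt0n.
have := memv_pick (W :&: Es 3%N); rewrite -/v memv_cap => /andP[vW vE].
have vD : v *m D = 0 by apply/eqP; rewrite -Wm.
have vv : v != - v.
  apply: contra v0 => /eqP h.
  have : (1 + 1) *: v = 0 by rewrite scalerDl scale1r {1}h addNr.
  move/eqP; rewrite scaler_eq0 => /orP [|//].
  by rewrite addr_eq0 (negPf m11).
have [f0 e0] := surj 0; have [f1 e1] := surj v; have [f2 e2] := surj (- v).
have d01 : f0 != f1 by apply: contra v0 => /eqP h; rewrite -e1 -h e0.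
have d02 : f0 != f2.
  apply: contra v0 => /eqP h; have : vec g f2 = 0 by rewrite -h e0.
  by rewrite e2 => /eqP; rewrite oppr_eq0.
have d12 : f1 != f2 by apply: contra vv => /eqP h; rewrite -[X in X == _]e1 h e2.
have sub : [set f0; f1; f2] \subset [set f | (vec g f *m D == 0%R) && ~~ avoid Es (vec g f)].
  apply/subsetP => f; rewrite !inE /avoid negb_forall => /orP[/orP[/eqP->|/eqP->]|/eqP->].
  - rewrite e0 mul0mx eqxx /=; apply/existsP; exists ord0; by rewrite negbK mem0v.
  - rewrite e1 vD eqxx /=; apply/existsP; exists (@Ordinal 3 2 isT); by rewrite negbK.
  - rewrite e2 mulNmx vD oppr0 eqxx /=; apply/existsP; exists (@Ordinal 3 2 isT).
    by rewrite negbK memvN.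
apply: leq_trans (subset_leq_card sub).
have -> : [set f0; f1; f2] = f0 |: [set f1; f2] by apply/setP => x; rewrite !inE orbA.
by rewrite cardsU1 cards2 !inE negb_or d01 d02 d12.
Qed.

Unset Implicit Arguments.
Theorem mainTheorem9 (K : fieldType) (n : nat) (V : {vspace 'M[K]_n})
  (Es : nat -> {vspace 'rV[K]_n}) :
  (2 \notin [pchar K])%N ->
  (2 <= n)%N ->
  (forall u, u \in V -> at_most_two_eigenvalues u) ->
  (n = 2%N -> forall u, u \in V -> at_most_one_nonzero_eigenvalue u) ->
  two_complex Es ->
  exists x : 'rV[K]_n, good V x /\ (forall i, (1 <= i <= n)%N -> x \notin Es i).
Proof.
move=> ch2 n2 H2 H1 tc.
have two0 : (2%:R : K) != 0 by apply: contra ch2 => h; rewrite inE /=.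
have m11 : (1 : K) != -1.
  apply: contra two0; rewrite -subr_eq0 opprK => /eqP h.
  by rewrite mulr2n h.
have dimE : forall i : 'I_n, \dim (Es i.+1) = (i.+2 %/ 2)%N.
  by move=> i; rewrite tc ?addn1 // ltn_ord.
suff [x [gx ax]] : exists x, good V x /\ avoid Es x.
  exists x; split => // i /andP[i1 iN].
  have hi : (i.-1 < n)%N by lia.
  by move/forallP: ax => /(_ (Ordinal hi)) /=; rewrite prednK.
have uniq3 : uniq [:: 0; 1; -1 : K].
  rewrite /= !inE negb_or eq_sym oner_eq0 eq_sym oppr_eq0 oner_eq0 /= andbT.
  exact: m11.
have [n3|n3] := eqVneq n 3%N.
  subst n.
  case: (classic (exists a : K, a \notin [:: 0; 1; -1])) => [[a ha]|hno].
    have uniq4 : uniq [:: 0; 1; -1; a].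
      by rewrite -[[:: 0; 1; -1; a]]/(rcons [:: 0; 1; -1] a) rcons_uniq ha uniq3.
    apply: (@assemble K 3 V Es [:: 0; 1; -1; a] 1%N isT ch2 n2 H2 H1 uniq4 erefl).
    - by apply: Hr1.
    - rewrite (eq_bigr (fun i : 'I_3 => 4 ^ (i.+2 %/ 2) - 1)%N); last by move=> i _; rewrite dimE.
      by rewrite !big_ord_recr big_ord0.
    - rewrite (eq_bigr (fun i : 'I_3 => 4 ^ (i.+2 %/ 2) - 1)%N); last by move=> i _; rewrite dimE.
      by rewrite !big_ord_recr big_ord0.
  have all3 : forall a : K, a \in [:: 0; 1; -1].
    by move=> a; apply: NNPP => h; apply: hno; exists a; apply/negP.
  apply: (@assemble K 3 V Es (sq3 K) 3%N isT ch2 n2 H2 H1 uniq3 erefl).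
  - by apply: Hr3 => //; rewrite (dimE (@Ordinal 3 2 isT)).
  - rewrite (eq_bigr (fun i : 'I_3 => 3 ^ (i.+2 %/ 2) - 1)%N); last by move=> i _; rewrite dimE.
    by rewrite !big_ord_recr big_ord0.
  - rewrite (eq_bigr (fun i : 'I_3 => 3 ^ (i.+2 %/ 2) - 1)%N); last by move=> i _; rewrite dimE.
    by rewrite !big_ord_recr big_ord0.
apply: (@assemble K n V Es [:: 0; 1; -1] 1%N isT ch2 n2 H2 H1 uniq3 erefl).
- by apply: Hr1 => //; apply: leq_trans n2.
- rewrite (eq_bigr (fun i : 'I_n => 3 ^ (i.+2 %/ 2) - 1)%N); last by move=> i _; rewrite dimE.
  exact: num3.
- rewrite (eq_bigr (fun i : 'I_n => 3 ^ (i.+2 %/ 2) - 1)%N); last by move=> i _; rewrite dimE.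
  have := num3 n2 n3; have : (3 ^ 1 <= 3 ^ n.-1)%N by rewrite leq_exp2l //; lia.
  move: (\sum_(i < n) _)%N => S; rewrite /= expn1; lia.
Qed.
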